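(* Let $V$ be a space. The following are equivalent: (i) $V$ is homothetic to $\overline{V}$; (ii) $V$ is homothetic to $\langle 1,\tau\rangle_{\mathbb{Q}}$ for some $\tau$ with $|\tau|^2\in\mathbb{Q}$.
   Context: A space is a $2$-dimensional $\mathbb{Q}$-vector subspace $V\subset\mathbb{C}$ containing two $\mathbb{R}$-linearly independent vectors; $\langle 1,\tau\rangle_{\mathbb{Q}}=\mathbb{Q}+\mathbb{Q}\tau$. Spaces $V_1,V_2$ are homothetic if $V_2=\lambda V_1$ for some $\lambda\in\mathbb{C}^*$. $\overline{V}$ is the complex conjugate of $V$. *)

(* Defs.v *)
From Stdlib Require Import Reals QArith Qreals.
From Coquelicot Require Import Coquelicot.

Open Scope C_scope.

Definition QtoC (q : Q) : C := RtoC (Q2R q).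

Definition is_rat (x : R) : Prop := exists q : Q, x = Q2R q.

Definition Qspan2 (a b : C) : C -> Prop :=
  fun z => exists p q : Q, z = QtoC p * a + QtoC q * b.

Definition Q_lin_indep2 (a b : C) : Prop :=
  forall p q : Q, QtoC p * a + QtoC q * b = 0 -> Q2R p = 0%R /\ Q2R q = 0%R.

Definition R_lin_indep2 (a b : C) : Prop :=
  forall r s : R, RtoC r * a + RtoC s * b = 0 -> r = 0%R /\ s = 0%R.

Definition Q_subspace_dim2 (V : C -> Prop) : Prop :=
  exists a b : C, Q_lin_indep2 a b /\ (forall z, V z <-> Qspan2 a b z).

Definition is_space (V : C -> Prop) : Prop :=
  Q_subspace_dim2 V /\ exists u v : C, V u /\ V v /\ R_lin_indep2 u v.

Definition homothetic (V1 V2 : C -> Prop) : Prop :=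
  exists lam : C, lam <> 0 /\ (forall z, V2 z <-> exists w, V1 w /\ z = lam * w).

Definition conj_set (V : C -> Prop) : C -> Prop := fun z => V (Cconj z).

(* Main.v *)
Require Import Defs.
From Stdlib Require Import Reals QArith Qreals Lra Psatz.
From Coquelicot Require Import Coquelicot.
Open Scope C_scope.

Definition cross (u v : C) : R := (fst u * snd v - snd u * fst v)%R.

Lemma QtoC_plus p q : QtoC (p + q) = QtoC p + QtoC q.
Proof. unfold QtoC; rewrite Q2R_plus; apply RtoC_plus. Qed.
Lemma QtoC_mult p q : QtoC (p * q) = QtoC p * QtoC q.
Proof. unfold QtoC; rewrite Q2R_mult; apply RtoC_mult. Qed.
Lemma QtoC_0 : QtoC 0 = 0.
Proof. unfold QtoC, Q2R; simpl. f_equal. field. Qed.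
Lemma QtoC_1 : QtoC 1 = 1.
Proof. unfold QtoC, Q2R; simpl. f_equal. field. Qed.
Lemma Q2R_half : Q2R (1#2) = (1/2)%R.
Proof. unfold Q2R; simpl. field. Qed.

Lemma Cconj_QtoC p : Cconj (QtoC p) = QtoC p.
Proof. unfold QtoC, RtoC, Cconj; simpl. f_equal. lra. Qed.

Lemma cross_indep u v : R_lin_indep2 u v -> cross u v <> 0%R.
Proof.
  intros H Hc. unfold cross in Hc. destruct u as [u1 u2], v as [v1 v2]; simpl in Hc.
  destruct (Req_dec (u1*u1+u2*u2) 0) as [H0|H0].
  - assert (u1 = 0%R) by nra. assert (u2 = 0%R) by nra. subst.
    destruct (H 1%R 0%R) as [H1 _].
    + unfold RtoC, Cmult, Cplus; simpl. f_equal; ring.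
    + lra.
  - destruct (H (u1*v1+u2*v2)%R (-(u1*u1+u2*u2))%R) as [_ H2].
    + unfold RtoC, Cmult, Cplus; simpl. f_equal.
      * replace (((u1 * v1 + u2 * v2) * u1 - 0 * u2 + (- (u1 * u1 + u2 * u2) * v1 - 0 * v2)))%R
          with (u2 * (u1*v2 - u2*v1))%R by ring. rewrite Hc; ring.
      * replace (((u1 * v1 + u2 * v2) * u2 + 0 * u1 + (- (u1 * u1 + u2 * u2) * v2 + 0 * v1)))%R
          with (- u1 * (u1*v2 - u2*v1))%R by ring. rewrite Hc; ring.
    + lra.
Qed.

Lemma span_cross (V : C -> Prop) a b :
  (forall z, V z <-> Qspan2 a b z) ->
  (exists u v, V u /\ V v /\ R_lin_indep2 u v) -> cross a b <> 0%R.
Proof.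
  intros Hab [u [v [Hu [Hv Hi]]]] Hc.
  apply (cross_indep _ _ Hi).
  apply Hab in Hu as [p1 [q1 ->]]. apply Hab in Hv as [p2 [q2 ->]].
  unfold cross in *; unfold QtoC, RtoC; destruct a as [a1 a2], b as [b1 b2]; simpl in *.
  set (P1 := Q2R p1). set (P2 := Q2R p2). set (Q1 := Q2R q1). set (Q2 := Q2R q2).
  match goal with |- ?e = _ => replace e with ((P1*Q2 - Q1*P2) * (a1*b2 - a2*b1))%R by ring end.
  rewrite Hc; ring.
Qed.

Lemma cross_nz_l a b : cross a b <> 0%R -> a <> 0.
Proof. intros H E; apply H; subst; unfold cross; simpl; ring. Qed.
Lemma cross_nz_r a b : cross a b <> 0%R -> b <> 0.
Proof. intros H E; apply H; subst; unfold cross; simpl; ring. Qed.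

Lemma span_sub a b a' b' z :
  Qspan2 a b a' -> Qspan2 a b b' -> Qspan2 a' b' z -> Qspan2 a b z.
Proof.
  intros [p1 [q1 ->]] [p2 [q2 ->]] [p [q ->]].
  exists (p*p1 + q*p2)%Q, (p*q1+q*q2)%Q.
  rewrite !QtoC_plus, !QtoC_mult. ring.
Qed.

Lemma span_eq a b a' b' :
  Qspan2 a b a' -> Qspan2 a b b' -> Qspan2 a' b' a -> Qspan2 a' b' b ->
  forall z, Qspan2 a b z <-> Qspan2 a' b' z.
Proof. intros; split; apply span_sub; auto. Qed.

Lemma scale_span (lam a b z : C) :
  (exists w, Qspan2 a b w /\ z = lam * w) <-> Qspan2 (lam*a) (lam*b) z.
Proof.
  split.
  - intros [w [[p [q ->]] ->]]. exists p, q. ring.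
  - intros [p [q ->]]. exists (QtoC p * a + QtoC q * b). split.
    + exists p, q; reflexivity.
    + ring.
Qed.

Lemma conj_span a b z : Qspan2 a b (Cconj z) <-> Qspan2 (Cconj a) (Cconj b) z.
Proof.
  split; intros [p [q H]]; exists p, q.
  - rewrite <- (Cconj_conj z), H. rewrite Cplus_conj, !Cmult_conj, !Cconj_QtoC. reflexivity.
  - rewrite H. rewrite Cplus_conj, !Cmult_conj, !Cconj_QtoC, !Cconj_conj. reflexivity.
Qed.

Lemma mem_l a b : Qspan2 a b a.
Proof. exists 1%Q, 0%Q. rewrite QtoC_1, QtoC_0. ring. Qed.
Lemma mem_r a b : Qspan2 a b b.
Proof. exists 0%Q, 1%Q. rewrite QtoC_1, QtoC_0. ring. Qed.

Lemma conj_nz (a : C) : a <> 0 -> Cconj a <> 0.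
Proof. intros H E; apply H. rewrite <- (Cconj_conj a), E. unfold Cconj, RtoC; simpl. f_equal; ring. Qed.

Lemma QtoC_opp p : QtoC (- p) = - QtoC p.
Proof. unfold QtoC; rewrite Q2R_opp; apply RtoC_opp. Qed.
Lemma QtoC_minus p q : QtoC (p - q) = QtoC p - QtoC q.
Proof. unfold QtoC; rewrite Q2R_minus; apply RtoC_minus. Qed.
Lemma QtoC_inv p : ~ p == 0 -> QtoC (/ p) = / QtoC p.
Proof.
  intros H. unfold QtoC; rewrite Q2R_inv by auto. apply RtoC_inv.
  intros E. apply H. apply eqR_Qeq. rewrite E. unfold Q2R; simpl; ring.
Qed.
Lemma QtoC_nz p : ~ p == 0 -> QtoC p <> 0.
Proof.
  intros H E. apply H. apply eqR_Qeq. unfold QtoC in E. injection E. intros ->.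
  unfold Q2R; simpl; ring.
Qed.
Lemma QtoC_half : QtoC (1#2) = / 2.
Proof. unfold QtoC; rewrite Q2R_half. rewrite RtoC_div by lra. field. Qed.
Lemma Q2R_nz p : Q2R p <> 0%R -> ~ p == 0.
Proof. intros H E. apply H. rewrite (Qeq_eqR _ _ E). unfold Q2R; simpl; ring. Qed.

Lemma homot_of (V : C -> Prop) a b (Hab : forall z, V z <-> Qspan2 a b z) (lam tau : C) :
  lam <> 0 -> (forall z, Qspan2 (RtoC 1) tau z <-> Qspan2 (lam*a) (lam*b) z) ->
  homothetic V (Qspan2 (RtoC 1) tau).
Proof.
  intros Hl H. exists lam. split; auto. intros z. rewrite H, <- scale_span.
  split; intros [w [Hw E]]; exists w; split; auto; apply Hab; auto.
Qed.

Lemma dir2 (V : C -> Prop) (Huv : exists u v, V u /\ V v /\ R_lin_indep2 u v) :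
  (exists tau : C, is_rat (Cmod tau ^ 2) /\ homothetic V (Qspan2 (RtoC 1) tau)) ->
  homothetic V (conj_set V).
Proof.
  intros [tau [[r Hr] [lam [Hl H]]]].
  set (a := / lam). set (b := / lam * tau).
  assert (Hab : forall z, V z <-> Qspan2 a b z).
  { intros z; split.
    - intros Hz. destruct (proj2 (H (lam * z)) (ex_intro _ z (conj Hz eq_refl))) as [p [q E]].
      exists p, q. unfold a, b.
      replace z with (/lam * (lam * z)) by (field; auto). rewrite E. field; auto.
    - intros [p [q E]].
      destruct (proj1 (H (lam * z))) as [w [Hw Ew]].
      + exists p, q. rewrite E. unfold a, b. field; auto.
      + replace z with w; auto.
        replace z with (/lam * (lam * z)) by (field; auto). rewrite Ew. field; auto. }
  pose proof (span_cross V a b Hab Huv) as Hc.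
  pose proof (cross_nz_l _ _ Hc) as Ha. pose proof (cross_nz_r _ _ Hc) as Hb.
  assert (Ht : tau <> 0). { intros E; apply Hb; unfold b; rewrite E; ring. }
  assert (HR : Q2R r <> 0%R).
  { rewrite <- Hr. apply Cmod_gt_0 in Ht. apply pow_nonzero. lra. }
  assert (Hrq : ~ r == 0). { intros E. apply HR. rewrite (Qeq_eqR _ _ E). unfold Q2R; simpl; ring. }
  assert (Hcb : Cconj b <> 0) by (apply conj_nz; auto).
  assert (Hca : Cconj a <> 0) by (apply conj_nz; auto).
  assert (Hcl : Cconj lam <> 0) by (apply conj_nz; auto).
  set (k := Cconj b / a).
  assert (Hka : k * a = Cconj b). { unfold k. field. auto. }
  assert (Hkb : k * b = QtoC r * Cconj a).
  { unfold k, QtoC. rewrite <- Hr. rewrite Cmod2_conj.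
    unfold b, a. rewrite Cmult_conj, !Cinv_conj by auto. field. split; auto. }
  exists k. split.
  { unfold k. intros E. apply Hcb. replace (Cconj b) with (Cconj b / a * a) by (field; auto).
    rewrite E. ring. }
  intros z. unfold conj_set. rewrite Hab, conj_span.
  transitivity (exists w, Qspan2 a b w /\ z = k * w).
  2:{ split; intros [w [Hw E]]; exists w; split; auto; apply Hab; auto. }
  rewrite scale_span, Hka, Hkb.
  apply span_eq.
  - apply mem_r.
  - exists r, 0%Q. rewrite QtoC_0. ring.
  - exists 0%Q, (/r)%Q. rewrite QtoC_0. unfold QtoC. rewrite Q2R_inv by auto.
    rewrite RtoC_inv by auto. field. intros E; apply HR. injection E; auto.
  - apply mem_l.
Qed.

Lemma dir1 (V : C -> Prop) a b (Hab : forall z, V z <-> Qspan2 a b z)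
  (Huv : exists u v, V u /\ V v /\ R_lin_indep2 u v) :
  homothetic V (conj_set V) ->
  exists tau : C, is_rat (Cmod tau ^ 2) /\ homothetic V (Qspan2 (RtoC 1) tau).
Proof.
  intros [lam [Hl H]].
  pose proof (span_cross V a b Hab Huv) as Hc.
  pose proof (cross_nz_l _ _ Hc) as Ha. pose proof (cross_nz_r _ _ Hc) as Hb.
  assert (Ea : exists p q, Cconj a = lam * (QtoC p * a + QtoC q * b)).
  { destruct (proj1 (H (Cconj a))) as [w [Hw E]].
    - unfold conj_set. rewrite Cconj_conj. apply Hab, mem_l.
    - apply Hab in Hw as [p [q Ew]]. exists p, q. rewrite E, Ew. reflexivity. }
  assert (Eb : exists p q, Cconj b = lam * (QtoC p * a + QtoC q * b)).
  { destruct (proj1 (H (Cconj b))) as [w [Hw E]].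
    - unfold conj_set. rewrite Cconj_conj. apply Hab, mem_r.
    - apply Hab in Hw as [p [q Ew]]. exists p, q. rewrite E, Ew. reflexivity. }
  destruct Ea as [p [q Ea]]. destruct Eb as [r [s Eb]].
  assert (E : Cconj a * (QtoC r * a + QtoC s * b) = Cconj b * (QtoC p * a + QtoC q * b)).
  { rewrite Ea, Eb. ring. }
  assert (Hpq : Q2R p <> 0%R \/ Q2R q <> 0%R).
  { destruct (Req_dec (Q2R p) 0); destruct (Req_dec (Q2R q) 0); auto.
    exfalso. apply (conj_nz a Ha). rewrite Ea. unfold QtoC. rewrite H0, H1.
    ring. }
  clear Ea Eb H.
  assert (EX : (Q2R r * (fst a*fst a+snd a*snd a) - 2 * Q2R p * (fst a*fst b+snd a*snd b)
                 - Q2R q * (fst b*fst b+snd b*snd b) = 0)%R).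
  { pose proof (f_equal fst E) as E1. pose proof (f_equal snd E) as E2. clear E.
    unfold cross in Hc. clear Hab Hpq Ha Hb.
    destruct a as [a1 a2], b as [b1 b2].
    unfold QtoC, Cconj, Cmult, Cplus, RtoC in E1, E2; simpl in E1, E2, Hc |- *.
    set (P := Q2R p) in *. set (Qq := Q2R q) in *. set (Rr := Q2R r) in *. set (S := Q2R s) in *.
    assert (HS : S = (- P)%R).
    { apply Rmult_eq_reg_l with (a1*b2 - a2*b1)%R; auto. nra. }
    nra. }
  clear E.
  destruct (Req_dec (Q2R q) 0) as [Hq0 | Hq].
  -
    destruct Hpq as [Hp | Hp]; [| contradiction].
    assert (Hpp : ~ (p + p) == 0).
    { apply Q2R_nz. rewrite Q2R_plus. lra. }
    set (rho := (r / (p + p))%Q).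
    assert (Hrho : Q2R rho = (Q2R r / (Q2R p + Q2R p))%R).
    { unfold rho. rewrite Q2R_div by auto. rewrite Q2R_plus. reflexivity. }
    set (c := QtoC rho).
    set (d := (1 - c) * a + b).
    assert (Hd : d <> 0).
    { intros E. apply Hc. assert (Eb : b = - ((1 - c) * a)).
      { replace b with (d - (1 - c) * a) by (unfold d; ring). rewrite E. ring. }
      unfold cross. rewrite Eb. unfold c, QtoC. destruct a as [a1 a2]. simpl. ring. }
    set (tau := ((1 + c) * a - b) / d).
    exists tau. split.
    + exists 1%Q.
      assert (Hx : (Q2R rho * (fst a*fst a+snd a*snd a) = fst a*fst b+snd a*snd b)%R).
      { apply Rmult_eq_reg_l with (2 * Q2R p)%R. 2: lra.
        rewrite Hrho. rewrite Hq0 in EX.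
        replace (2 * Q2R p * (Q2R r / (Q2R p + Q2R p) * (fst a * fst a + snd a * snd a)))%R
          with (Q2R r * (fst a * fst a + snd a * snd a))%R by (field; lra). lra. }
      assert (Hm : (Cmod ((1 + c) * a - b) ^ 2 = Cmod d ^ 2)%R).
      { rewrite !Cmod2_alt. unfold d, c, QtoC. clear - Hx.
        destruct a as [a1 a2], b as [b1 b2]. unfold Re, Im; simpl in *. nra. }
      unfold tau. rewrite Cmod_div by auto.
      assert (Hm' : Cmod d <> 0%R) by (apply Cmod_gt_0 in Hd; lra).
      replace ((Cmod ((1 + c) * a - b) / Cmod d) ^ 2)%R
        with ((Cmod ((1 + c) * a - b))^2 / (Cmod d)^2)%R by (field; auto).
      rewrite Hm. unfold Q2R; simpl. field. auto.
    + apply (homot_of V a b Hab (/d)). { intros E. apply C1_nz. rewrite <- (Cinv_r d), E by auto. ring. }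
      apply span_eq.
      * exists (1#2)%Q, (1#2)%Q. rewrite QtoC_half. unfold tau, d. field. exact Hd.
      * exists ((1 + rho) * (1#2))%Q, (-((1 - rho) * (1#2)))%Q.
        rewrite QtoC_opp, !QtoC_mult, QtoC_plus, QtoC_minus, QtoC_1, QtoC_half. fold c.
        unfold tau, d. field. exact Hd.
      * exists (1 - rho)%Q, 1%Q. rewrite QtoC_minus, QtoC_1. fold c. unfold d. field. exact Hd.
      * exists (1 + rho)%Q, (Qopp 1). rewrite QtoC_opp, QtoC_plus, QtoC_1. fold c. unfold tau, d. field. exact Hd.
  -
    pose proof (Q2R_nz _ Hq) as Hqq.
    set (tau := (QtoC q * b + QtoC p * a) / (QtoC q * a)).
    assert (HqC : QtoC q <> 0) by (apply QtoC_nz; auto).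
    exists tau. split.
    + exists ((q*r + p*p) / (q*q))%Q.
      assert (Hd : QtoC q * a <> 0) by (apply Cmult_neq_0; auto).
      unfold tau. rewrite Cmod_div by auto.
      assert (Hm : Cmod (QtoC q * a) <> 0%R) by (apply Cmod_gt_0 in Hd; lra).
      rewrite Q2R_div by (intros E; apply Hqq; apply Qmult_integral in E; tauto).
      rewrite Q2R_plus, !Q2R_mult.
      replace ((Cmod (QtoC q * b + QtoC p * a) / Cmod (QtoC q * a)) ^ 2)%R
        with ((Cmod (QtoC q * b + QtoC p * a))^2 / (Cmod (QtoC q * a))^2)%R by (field; auto).
      rewrite !Cmod2_alt.
      unfold cross in Hc. clear Hab Hpq Hb Hd Hm tau HqC.
      destruct a as [a1 a2], b as [b1 b2].
      unfold QtoC, Cmult, Cplus, RtoC, Re, Im; simpl in *.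
      assert (Ha2 : (a1*a1+a2*a2 <> 0)%R).
      { intros E. apply Ha. assert (a1 = 0%R) by nra. assert (a2 = 0%R) by nra. subst. reflexivity. }
      assert (HR : Q2R r = ((2 * Q2R p * (a1*b1+a2*b2) + Q2R q * (b1*b1+b2*b2)) / (a1*a1+a2*a2))%R).
      { apply Rmult_eq_reg_r with (a1*a1+a2*a2)%R; auto. field_simplify; auto. lra. }
      rewrite HR. field. split; auto. split; auto.
      intros E. apply Ha2. apply Rmult_eq_reg_l with (Q2R q * Q2R q)%R. 2:{ apply Rmult_integral_contrapositive; auto. }
      lra.
    + apply (homot_of V a b Hab (/a)). { intros E. apply C1_nz. rewrite <- (Cinv_r a), E by auto. ring. }
      apply span_eq.
      * exists 1%Q, 0%Q. rewrite QtoC_1, QtoC_0. field. auto.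
      * exists (-(p * /q))%Q, 1%Q. rewrite QtoC_opp, QtoC_mult, QtoC_inv, QtoC_1 by auto. unfold tau. field. auto.
      * exists 1%Q, 0%Q. rewrite QtoC_1, QtoC_0. field. auto.
      * exists (p * /q)%Q, 1%Q. rewrite QtoC_mult, QtoC_inv, QtoC_1 by auto. unfold tau. field. auto.
Qed.

Close Scope C_scope.

Theorem lemma4p4 (V : C -> Prop) (HV : is_space V) :
  homothetic V (conj_set V) <->
  exists tau : C, is_rat (Cmod tau ^ 2) /\ homothetic V (Qspan2 (RtoC 1) tau).
Proof.
  destruct HV as [[a [b [_ Hab]]] Huv]. split.
  - apply (dir1 V a b Hab Huv).
  - apply (dir2 V Huv).
Qed.
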